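(* For all m2m spaces $\mathcal X=(X,r,\nu)$ and $\mathcal Y=(Y,d,\lambda)$, $d_{2GP}(\mathcal X,\mathcal Y)=\inf_{r'}d_P^{\mathcal M_f(X\sqcup Y,r')}(\nu,\lambda)$, where the infimum ranges over all metrics $r'$ on the disjoint union $X\sqcup Y$ extending $r$ and $d$, and $\nu,\lambda$ are regarded as two-level measures on $X\sqcup Y$ via the canonical inclusions.
   Context: For a Polish space $X$, $\mathcal M_f(X)$ is the set of finite Borel measures; $M_\nu(A)=\int\mu(A)\,d\nu(\mu)$; $g_*\mu=\mu\circ g^{-1}$, $g_{**}\nu=\nu\circ(g_* )^{-1}$. An m2m space is $(X,r,\nu)$, $X\subset\mathbb R^{\mathbb N}$ non-empty, $(X,r)$ complete separable metric, $\nu\in\mathcal M_f(\mathcal M_f(X))$, considered up to equivalence (measurable maps isometric on $\operatorname{supp}M_\nu$ with $\lambda=f_{**}\nu$). Prokhorov distance for finite measures on a metric space $(S,\rho)$: $d_P^S(\mu,\eta)=\inf\{\varepsilon>0:\mu(A)\le\eta(A^\varepsilon)+\varepsilon,\eta(A)\le\mu(A^\varepsilon)+\varepsilon\ \forall A\text{ closed}\}$, $A^\varepsilon$ the open $\varepsilon$-neighbourhood; $d_P^{\mathcal M_f(Z)}$ is the Prokhorov metric for measures on $(\mathcal M_f(Z),d_P^Z)$. $d_{2GP}(\mathcal X,\mathcal Y)=\inf d_P^{\mathcal M_f(Z)}(\iota_{X**}\nu,\iota_{Y**}\lambda)$ over complete separable metric spaces $Z$ and isometric embeddings $\iota_X:X\to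 Z$, $\iota_Y:Y\to Z$. *)

(* Defs.v *)
From Stdlib Require Import Reals.
From Coquelicot Require Import Rbar Lub.
Open Scope R_scope.

Section Generic.
Context {T : Type}.

(* Level-one distances are real metrics (embedded via Finite); the level-two
   distance is the Prokhorov distance, which we compute in Rbar. *)

Definition nbhd (dist : T -> T -> Rbar) (A : T -> Prop) (e : R) : T -> Prop :=
  fun x => exists a, A a /\ Rbar_lt (dist x a) (Finite e).

Definition is_open (dist : T -> T -> Rbar) (U : T -> Prop) : Prop :=
  forall x, U x -> exists e, 0 < e /\ forall y, Rbar_lt (dist x y) (Finite e) -> U y.

Definition is_closed (dist : T -> T -> Rbar) (A : T -> Prop) : Prop :=
  is_open dist (fun x => ~ A x).

Definition sigma_algebra (S : (T -> Prop) -> Prop) : Prop :=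
  S (fun _ => False) /\
  (forall A, S A -> S (fun x => ~ A x)) /\
  (forall F : nat -> T -> Prop, (forall n, S (F n)) -> S (fun x => exists n, F n x)).

Definition borel (dist : T -> T -> Rbar) (A : T -> Prop) : Prop :=
  forall S, sigma_algebra S -> (forall U, is_open dist U -> S U) -> S A.

Definition is_fmeasure (dist : T -> T -> Rbar) (mu : (T -> Prop) -> R) : Prop :=
  (forall A, borel dist A -> 0 <= mu A) /\
  mu (fun _ => False) = 0 /\
  (forall F : nat -> T -> Prop,
     (forall n, borel dist (F n)) ->
     (forall n m x, F n x -> F m x -> n = m) ->
     infinite_sum (fun n => mu (F n)) (mu (fun x => exists n, F n x))).

Definition prokhorov (dist : T -> T -> Rbar) (mu eta : (T -> Prop) -> R) : Rbar :=
  Rbar_glb (fun v => exists e : R, v = Finite e /\ 0 < e /\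
    forall A, is_closed dist A ->
      mu A <= eta (nbhd dist A e) + e /\ eta A <= mu (nbhd dist A e) + e).

End Generic.

Definition is_metric {T : Type} (d : T -> T -> R) : Prop :=
  (forall x y, d x y = 0 <-> x = y) /\
  (forall x y, d x y = d y x) /\
  (forall x y z, d x z <= d x y + d y z).

Definition is_complete {T : Type} (d : T -> T -> R) : Prop :=
  forall u : nat -> T,
    (forall e, 0 < e -> exists N, forall n m, (N <= n)%nat -> (N <= m)%nat -> d (u n) (u m) < e) ->
    exists l, forall e, 0 < e -> exists N, forall n, (N <= n)%nat -> d (u n) l < e.

Definition countable_set {T : Type} (D : T -> Prop) : Prop :=
  exists f : T -> nat, forall x y, D x -> D y -> f x = f y -> x = y.

Definition is_separable {T : Type} (d : T -> T -> R) : Prop :=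
  exists D : T -> Prop, countable_set D /\
    forall x e, 0 < e -> exists y, D y /\ d x y < e.

Definition polish_metric {T : Type} (d : T -> T -> R) : Prop :=
  is_metric d /\ is_complete d /\ is_separable d.

Definition isometric {T Z : Type} (d : T -> T -> R) (dZ : Z -> Z -> R) (i : T -> Z) : Prop :=
  forall x y, dZ (i x) (i y) = d x y.

Definition fin_dist {T : Type} (d : T -> T -> R) : T -> T -> Rbar := fun x y => Finite (d x y).

Definition Mf {T : Type} (d : T -> T -> R) : Type :=
  { mu : (T -> Prop) -> R | is_fmeasure (fin_dist d) mu }.

Definition dP {T : Type} (d : T -> T -> R) : Mf d -> Mf d -> Rbar :=
  fun mu eta => prokhorov (fin_dist d) (proj1_sig mu) (proj1_sig eta).

Definition is_2measure {T : Type} (d : T -> T -> R) (nu : (Mf d -> Prop) -> R) : Prop :=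
  is_fmeasure (dP d) nu.

Definition dP2 {T : Type} (d : T -> T -> R) (nu lam : (Mf d -> Prop) -> R) : Rbar :=
  prokhorov (dP d) nu lam.

Definition push {T Z : Type} (g : T -> Z) (mu : (T -> Prop) -> R) : (Z -> Prop) -> R :=
  fun A => mu (fun x => A (g x)).

(* g_** nu = nu o (g_* )^{-1}, for nu a measure on M_f(T) *)
Definition push2 {T Z : Type} (d : T -> T -> R) (dZ : Z -> Z -> R) (g : T -> Z)
  (nu : (Mf d -> Prop) -> R) : (Mf dZ -> Prop) -> R :=
  fun B => nu (fun mu => exists eta : Mf dZ, B eta /\ proj1_sig eta = push g (proj1_sig mu)).

(* X is a nonempty subset of R^N; the carrier is the subtype {x | Xs x} *)
Definition RN := nat -> R.
Definition pts (Xs : RN -> Prop) : Type := { x : RN | Xs x }.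

Definition is_m2m (Xs : RN -> Prop) (r : pts Xs -> pts Xs -> R)
  (nu : (Mf r -> Prop) -> R) : Prop :=
  (exists x, Xs x) /\ polish_metric r /\ is_2measure r nu.

Definition d2GP (Xs : RN -> Prop) (r : pts Xs -> pts Xs -> R) (nu : (Mf r -> Prop) -> R)
  (Ys : RN -> Prop) (d : pts Ys -> pts Ys -> R) (lam : (Mf d -> Prop) -> R) : Rbar :=
  Rbar_glb (fun v => exists (Z : Type) (dZ : Z -> Z -> R) (iX : pts Xs -> Z) (iY : pts Ys -> Z),
    polish_metric dZ /\ isometric r dZ iX /\ isometric d dZ iY /\
    v = dP2 dZ (push2 r dZ iX nu) (push2 d dZ iY lam)).

Definition extends_both {X Y : Type} (r : X -> X -> R) (d : Y -> Y -> R)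
  (r' : (X + Y)%type -> (X + Y)%type -> R) : Prop :=
  is_metric r' /\
  (forall x x', r' (inl x) (inl x') = r x x') /\
  (forall y y', r' (inr y) (inr y') = d y y').

(* Main.v *)
Require Import Defs.
From Stdlib Require Import Reals Lra Lia Classical FunctionalExtensionality PropExtensionality ProofIrrelevance IndefiniteDescription.
From Coquelicot Require Import Rbar Lub.
Open Scope R_scope.

Definition setP (P : R -> Prop) : Rbar -> Prop := fun v => exists e, v = Finite e /\ P e.
Definition glbP (P : R -> Prop) : Rbar := Rbar_glb (setP P).

Lemma glbP_correct P : Rbar_is_glb (setP P) (glbP P).
Proof. unfold glbP, Rbar_glb. exact (proj2_sig (Rbar_ex_glb _)). Qed.

Lemma glbP_le P e : P e -> Rbar_le (glbP P) (Finite e).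
Proof. intro H. apply (proj1 (glbP_correct P)). exists e; auto. Qed.

Lemma glbP_lb P b : (forall e, P e -> Rbar_le b (Finite e)) -> Rbar_le b (glbP P).
Proof. intro H. apply (proj2 (glbP_correct P)). intros x [e [-> He]]. auto. Qed.

Lemma glbP_ge0 P : (forall e, P e -> 0 < e) -> Rbar_le (Finite 0) (glbP P).
Proof. intro H. apply glbP_lb. intros e He. simpl. apply Rlt_le; auto. Qed.

Lemma Rbar_le_eps a b : (forall h, 0 < h -> Rbar_le a (Finite (b + h))) -> Rbar_le a (Finite b).
Proof.
  intro H. destruct a as [a| |]; simpl.
  - destruct (Rle_dec a b) as [|Hn]; auto.
    specialize (H ((a - b)/2) ltac:(lra)). simpl in H. lra.
  - specialize (H 1 Rlt_0_1). simpl in H. auto.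
  - auto.
Qed.

Lemma glbP_approx P g h : glbP P = Finite g -> 0 < h -> exists e, P e /\ e < g + h.
Proof.
  intros Hg Hh. apply NNPP. intro Hn.
  assert (Rbar_le (Finite (g + h)) (glbP P)).
  { apply glbP_lb. intros e He. simpl. destruct (Rle_dec (g+h) e); auto.
    exfalso. apply Hn. exists e. split; auto. lra. }
  rewrite Hg in H. simpl in H. lra.
Qed.

Lemma Rbar_le_pinf x : Rbar_le x p_infty.
Proof. destruct x; simpl; auto. Qed.

Lemma glbP_shift P Q c : 0 <= c -> (forall e, P e -> 0 < e) ->
  (forall e, P e -> Q (e + c)) ->
  Rbar_le (glbP Q) (Rbar_plus (glbP P) (Finite c)).
Proof.
  intros Hc Hpos H.
  pose proof (glbP_ge0 P Hpos) as H0.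
  destruct (glbP P) as [g| |] eqn:Eg.
  - simpl. apply Rbar_le_eps. intros h Hh.
    destruct (glbP_approx P g h Eg Hh) as [e [He1 He2]].
    eapply Rbar_le_trans. apply glbP_le. apply H. exact He1. simpl. lra.
  - simpl. apply Rbar_le_pinf.
  - simpl in H0. contradiction.
Qed.

Lemma glbP_sum P1 P2 Q : (forall e, P1 e -> 0 < e) -> (forall e, P2 e -> 0 < e) ->
  (forall e1 e2, P1 e1 -> P2 e2 -> Q (e1 + e2)) ->
  Rbar_le (glbP Q) (Rbar_plus (glbP P1) (glbP P2)).
Proof.
  intros H1 H2 H.
  pose proof (glbP_ge0 P1 H1) as G1. pose proof (glbP_ge0 P2 H2) as G2.
  destruct (glbP P1) as [g1| |] eqn:E1; [| |simpl in G1; contradiction];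
  destruct (glbP P2) as [g2| |] eqn:E2; try (simpl in G2; contradiction);
  simpl; try apply Rbar_le_pinf.
  apply Rbar_le_eps. intros h Hh.
  destruct (glbP_approx P1 g1 (h/2) E1 ltac:(lra)) as [e1 [He1 He1']].
  destruct (glbP_approx P2 g2 (h/2) E2 ltac:(lra)) as [e2 [He2 He2']].
  eapply Rbar_le_trans. apply glbP_le. apply H; eauto. simpl. lra.
Qed.

Lemma glbP_zero P : (forall e, P e -> 0 < e) -> (forall e, 0 < e -> P e) -> glbP P = Finite 0.
Proof.
  intros H1 H2. apply Rbar_le_antisym.
  - apply Rbar_le_eps. intros h Hh. apply glbP_le. apply H2. lra.
  - apply glbP_ge0; auto.
Qed.

Definition rmet {T : Type} (D : T -> T -> Rbar) : Prop :=
  (forall x, D x x = Finite 0) /\ (forall x y, Rbar_le (Finite 0) (D x y)) /\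
  (forall x y, D x y = D y x) /\
  (forall x y z, Rbar_le (D x z) (Rbar_plus (D x y) (D y z))).

Lemma fin_of_lt {T} (D : T -> T -> Rbar) x y e : rmet D -> Rbar_lt (D x y) (Finite e) ->
  exists t, D x y = Finite t /\ 0 <= t /\ t < e.
Proof.
  intros [_ [H0 _]] H. specialize (H0 x y).
  destruct (D x y) as [t| |]; simpl in *; try contradiction. exists t; auto.
Qed.

Lemma tri_lt {T} (D : T -> T -> Rbar) x y z a b : rmet D ->
  Rbar_lt (D x y) (Finite a) -> Rbar_lt (D y z) (Finite b) -> Rbar_lt (D x z) (Finite (a + b)).
Proof.
  intros HD H1 H2.
  destruct (fin_of_lt D x y a HD H1) as [t1 [E1 [? ?]]].
  destruct (fin_of_lt D y z b HD H2) as [t2 [E2 [? ?]]].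
  destruct HD as [_ [_ [_ Ht]]]. specialize (Ht x y z). rewrite E1, E2 in Ht.
  eapply Rbar_le_lt_trans. exact Ht. simpl. lra.
Qed.

Lemma rmet_fin {T} (d : T -> T -> R) : is_metric d -> rmet (fin_dist d).
Proof.
  intros [H1 [H2 H3]]. unfold fin_dist. split; [|split; [|split]].
  - intro x. f_equal. apply H1. reflexivity.
  - intros x y. simpl. pose proof (H3 x y x). rewrite (H2 y x) in H. 
    assert (d x x = 0) by (apply H1; reflexivity). lra.
  - intros x y. rewrite H2. reflexivity.
  - intros. simpl. apply H3.
Qed.

Section Borel.
Context {T : Type} (D : T -> T -> Rbar).

Lemma borel_open U : is_open D U -> borel D U.
Proof. intros H S HS HU. auto. Qed.

Lemma borel_compl A : borel D A -> borel D (fun x => ~ A x).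
Proof. intros H S HS HU. apply HS. apply H; auto. Qed.

Lemma borel_union (F : nat -> T -> Prop) : (forall n, borel D (F n)) -> borel D (fun x => exists n, F n x).
Proof. intros H S HS HU. apply HS. intro n. apply H; auto. Qed.

Lemma borel_empty : borel D (fun _ => False).
Proof. intros S HS HU. apply HS. Qed.

Lemma borel_closed A : is_closed D A -> borel D A.
Proof.
  intro H. assert (E : A = fun x => ~ ~ A x).
  { apply functional_extensionality. intro x. apply propositional_extensionality. tauto. }
  rewrite E. apply borel_compl. apply borel_open. exact H.
Qed.

Lemma borel_ext A B : (forall x, A x <-> B x) -> borel D A -> borel D B.
Proof.
  intros H HA. assert (A = B) by (apply functional_extensionality; intro; apply propositional_extensionality; auto).
  subst; auto.
Qed.

Lemma borel_diff A B : borel D A -> borel D B -> borel D (fun x => B x /\ ~ A x).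
Proof.
  intros HA HB.
  apply borel_ext with (fun x => ~ exists n : nat, (if n then (fun x => ~ B x) else A) x).
  { intro x. split.
    - intro H. split. + apply NNPP. intro. apply H. exists 0%nat. auto.
      + intro. apply H. exists 1%nat. auto.
    - intros [H1 H2] [n Hn]. destruct n; auto. }
  apply borel_compl. apply borel_union. intros [|n]. apply borel_compl; auto. auto.
Qed.

Lemma fmeasure_mono mu A B : is_fmeasure D mu -> borel D A -> borel D B ->
  (forall x, A x -> B x) -> mu A <= mu B.
Proof.
  intros [Hpos [H0 Hadd]] HA HB HAB.
  set (F := fun n : nat => match n with 0%nat => A | 1%nat => fun x => B x /\ ~ A x | _ => fun _ => False end).
  assert (HF : forall n, borel D (F n)).
  { intros [|[|n]]; unfold F; simpl. auto. apply borel_diff; auto. apply borel_empty. }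
  assert (Hdis : forall n m x, F n x -> F m x -> n = m).
  { intros [|[|n]] [|[|m]] x; unfold F; simpl; intros; try reflexivity; tauto. }
  specialize (Hadd F HF Hdis).
  assert (E : (fun x => exists n, F n x) = B).
  { apply functional_extensionality. intro x. apply propositional_extensionality. split.
    - intros [[|[|n]] Hn]; unfold F in Hn; simpl in Hn; [apply HAB; exact Hn| tauto | tauto].
    - intro Hb. destruct (classic (A x)). exists 0%nat; auto. exists 1%nat; simpl; auto. }
  rewrite E in Hadd.
  assert (Hs : infinite_sum (fun n => mu (F n)) (mu A + mu (fun x => B x /\ ~ A x))).
  { intros eps Heps. exists 1%nat. intros n Hn.
    assert (sum_f_R0 (fun n => mu (F n)) n = mu A + mu (fun x => B x /\ ~ A x)).
    { induction n. lia. destruct n. simpl. reflexivity.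
      simpl sum_f_R0 in *. rewrite IHn by lia. simpl. rewrite H0. ring. }
    rewrite H. unfold R_dist. rewrite Rminus_diag, Rabs_R0. auto. }
  pose proof (uniqueness_sum _ _ _ Hadd Hs).
  pose proof (Hpos _ (borel_diff A B HA HB)). lra.
Qed.

End Borel.

Definition cont {T T'} (D : T -> T -> Rbar) (D' : T' -> T' -> Rbar) (g : T -> T') :=
  forall U, is_open D' U -> is_open D (fun x => U (g x)).

Lemma lip_cont {T T'} (D : T -> T -> Rbar) (D' : T' -> T' -> Rbar) (g : T -> T') :
  (forall x y, Rbar_le (D' (g x) (g y)) (D x y)) -> cont D D' g.
Proof.
  intros Hl U HU x Hx. destruct (HU _ Hx) as [e [He H]]. exists e. split; auto.
  intros y Hy. apply H. eapply Rbar_le_lt_trans. apply Hl. auto.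
Qed.

Lemma cont_closed {T T'} (D : T -> T -> Rbar) (D' : T' -> T' -> Rbar) (g : T -> T') A :
  cont D D' g -> is_closed D' A -> is_closed D (fun x => A (g x)).
Proof. intros Hc HA. apply Hc in HA. exact HA. Qed.

Lemma borel_pre {T T'} (D : T -> T -> Rbar) (D' : T' -> T' -> Rbar) (g : T -> T') A :
  cont D D' g -> borel D' A -> borel D (fun x => A (g x)).
Proof.
  intros Hc HA S HS HU.
  apply (HA (fun B => S (fun x => B (g x)))).
  - destruct HS as [H1 [H2 H3]]. split; [|split].
    + exact H1.
    + intros B HB. apply H2. exact HB.
    + intros F HF. apply (H3 (fun n x => F n (g x))). exact HF.
  - intros U HUo. apply HU. apply Hc. exact HUo.
Qed.

Lemma push_fmeasure {T T'} (D : T -> T -> Rbar) (D' : T' -> T' -> Rbar) (g : T -> T') mu :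
  cont D D' g -> is_fmeasure D mu -> is_fmeasure D' (push g mu).
Proof.
  intros Hc [H1 [H2 H3]]. unfold push. split; [|split].
  - intros A HA. apply H1. apply borel_pre with D'; auto.
  - exact H2.
  - intros F HF Hd. apply (H3 (fun n x => F n (g x))).
    + intro n. apply borel_pre with D'; auto.
    + intros n m x. apply Hd.
Qed.

Section Top.
Context {T : Type} (D : T -> T -> Rbar) (HD : rmet D).

Definition cl (S : T -> Prop) : T -> Prop :=
  fun x => forall h, 0 < h -> exists s, S s /\ Rbar_lt (D x s) (Finite h).

Lemma cl_closed S : is_closed D (cl S).
Proof.
  intros x Hx. unfold cl in Hx.
  apply not_all_ex_not in Hx. destruct Hx as [h Hh].
  apply imply_to_and in Hh. destruct Hh as [Hh Hn].
  exists (h/2). split. lra. intros y Hy Hcy.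
  destruct (Hcy (h/2) ltac:(lra)) as [s [Hs Hys]].
  apply Hn. exists s. split; auto.
  replace h with (h/2 + h/2) by field. eapply tri_lt; eauto.
Qed.

Lemma cl_sub S x : S x -> cl S x.
Proof.
  intros Hs h Hh. exists x. split; auto. destruct HD as [H0 _]. rewrite H0. simpl. auto.
Qed.

Lemma nbhd_open A e : is_open D (nbhd D A e).
Proof.
  intros x [a [Ha Hxa]]. destruct (fin_of_lt D x a e HD Hxa) as [t [Et [Ht1 Ht2]]].
  exists ((e - t)/2). split. lra. intros y Hy. exists a. split; auto.
  replace e with ((e - t)/2 + (t + (e - t)/2)) by field. apply tri_lt with x; auto.
  destruct HD as [_ [_ [Hs _]]]. rewrite Hs. auto. rewrite Et. simpl. lra.
Qed.

Lemma nbhd_borel A e : borel D (nbhd D A e).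
Proof. apply borel_open, nbhd_open. Qed.

End Top.

Definition W {T} (D : T -> T -> Rbar) (mu eta : (T -> Prop) -> R) (e : R) : Prop :=
  0 < e /\ forall A, is_closed D A -> mu A <= eta (nbhd D A e) + e /\ eta A <= mu (nbhd D A e) + e.

Lemma prok_eq {T} (D : T -> T -> Rbar) mu eta : prokhorov D mu eta = glbP (W D mu eta).
Proof. reflexivity. Qed.

Lemma glbP_mono P Q : (forall e, P e -> Q e) -> Rbar_le (glbP Q) (glbP P).
Proof. intro H. apply Rbar_glb_subset. intros x [e [-> He]]. exists e; auto. Qed.

Section Prok.
Context {T : Type} (D : T -> T -> Rbar) (HD : rmet D).

Lemma prok_ge0 mu eta : Rbar_le (Finite 0) (prokhorov D mu eta).
Proof. rewrite prok_eq. apply glbP_ge0. intros e [H _]; auto. Qed.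

Lemma prok_refl mu : is_fmeasure D mu -> prokhorov D mu mu = Finite 0.
Proof.
  intro Hm. rewrite prok_eq. apply glbP_zero. intros e [H _]; auto.
  intros e He. split; auto. intros A HA.
  assert (mu A <= mu (nbhd D A e)).
  { apply fmeasure_mono with D; auto. apply borel_closed; auto. apply nbhd_borel; auto.
    intros x Hx. exists x. split; auto. destruct HD as [H0 _]. rewrite H0. simpl. auto. }
  split; lra.
Qed.

Lemma prok_sym mu eta : prokhorov D mu eta = prokhorov D eta mu.
Proof.
  rewrite !prok_eq. apply Rbar_le_antisym; apply glbP_mono; intros e [H1 H2]; split; auto;
  intros A HA; specialize (H2 A HA); tauto.
Qed.

Lemma chain a b c e1 e2 : is_fmeasure D a -> is_fmeasure D b -> is_fmeasure D c ->
  0 < e1 -> 0 < e2 ->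
  (forall A, is_closed D A -> a A <= b (nbhd D A e1) + e1) ->
  (forall A, is_closed D A -> b A <= c (nbhd D A e2) + e2) ->
  forall A, is_closed D A -> a A <= c (nbhd D A (e1 + e2)) + (e1 + e2).
Proof.
  intros Ha Hb Hc He1 He2 H1 H2 A HA.
  set (K := cl D (nbhd D A e1)).
  assert (HK : is_closed D K) by (apply cl_closed; auto).
  assert (b (nbhd D A e1) <= b K).
  { apply fmeasure_mono with D; auto. apply nbhd_borel; auto. apply borel_closed; auto.
    intros x Hx. apply cl_sub; auto. }
  assert (c (nbhd D K e2) <= c (nbhd D A (e1 + e2))).
  { apply fmeasure_mono with D; auto. apply nbhd_borel; auto. apply nbhd_borel; auto.
    intros x [k [Hk Hxk]].
    destruct (fin_of_lt D x k e2 HD Hxk) as [t [Et [Ht1 Ht2]]].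
    destruct (Hk ((e2 - t)/2) ltac:(lra)) as [s [[a0 [Ha0 Hsa]] Hks]].
    exists a0. split; auto.
    replace (e1 + e2) with (((t + (e2 - t)/2) + (e2 - t)/2) + e1) by field.
    apply tri_lt with s; auto. apply tri_lt with k; auto. rewrite Et. simpl. lra. }
  specialize (H1 A HA). specialize (H2 K HK). lra.
Qed.

Lemma prok_tri (a b c : (T -> Prop) -> R) : is_fmeasure D a -> is_fmeasure D b -> is_fmeasure D c ->
  Rbar_le (prokhorov D a c) (Rbar_plus (prokhorov D a b) (prokhorov D b c)).
Proof.
  intros Ha Hb Hc. rewrite !prok_eq. apply glbP_sum.
  - intros e [H _]; auto.
  - intros e [H _]; auto.
  - intros e1 e2 [P1 Q1] [P2 Q2]. split. lra. intros A HA. split.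
    + apply chain with b; auto; intros; [apply Q1|apply Q2]; auto.
    + replace (e1 + e2) with (e2 + e1) by ring. apply chain with b; auto; intros; [apply Q2|apply Q1]; auto.
Qed.

End Prok.

Definition fm {T} (D : T -> T -> Rbar) := { mu : (T -> Prop) -> R | is_fmeasure D mu }.
Definition prokM {T} (D : T -> T -> Rbar) : fm D -> fm D -> Rbar :=
  fun a b => prokhorov D (proj1_sig a) (proj1_sig b).

Lemma prokM_rmet {T} (D : T -> T -> Rbar) : rmet D -> rmet (prokM D).
Proof.
  intro HD. unfold prokM. split; [|split; [|split]].
  - intros [x Hx]. apply prok_refl; auto.
  - intros. apply prok_ge0.
  - intros. apply prok_sym.
  - intros [x Hx] [y Hy] [z Hz]. apply prok_tri; auto.
Qed.

Lemma prok_lip {T T'} (D : T -> T -> Rbar) (D' : T' -> T' -> Rbar) (g : T -> T') :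
  rmet D -> rmet D' -> (forall x y, Rbar_le (D' (g x) (g y)) (D x y)) ->
  forall a b, is_fmeasure D a -> is_fmeasure D b ->
  Rbar_le (prokhorov D' (push g a) (push g b)) (prokhorov D a b).
Proof.
  intros HD HD' Hl a b Ha Hb. pose proof (lip_cont D D' g Hl) as Hc.
  assert (one : forall a b e, is_fmeasure D a -> is_fmeasure D b ->
     (forall A, is_closed D A -> a A <= b (nbhd D A e) + e) ->
     forall A, is_closed D' A -> push g a A <= push g b (nbhd D' A e) + e).
  { clear a b Ha Hb. intros a b e Ha Hb H A HA. unfold push.
    specialize (H _ (cont_closed D D' g A Hc HA)).
    assert (b (nbhd D (fun x => A (g x)) e) <= b (fun x => nbhd D' A e (g x))).
    { apply fmeasure_mono with D; auto. apply nbhd_borel; auto.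
      apply borel_pre with D'; auto. apply nbhd_borel; auto.
      intros x [y [Hy Hxy]]. exists (g y). split; auto. eapply Rbar_le_lt_trans; eauto. }
    lra. }
  rewrite !prok_eq. apply glbP_mono. intros e [He H]. split; auto. intros A HA. split.
  - apply one; auto. intros; apply H; auto.
  - apply one; auto. intros; apply H; auto.
Qed.

Lemma G0 {T1 T2} (D1 : T1 -> T1 -> Rbar) (D2 : T2 -> T2 -> Rbar) (J : T1 -> T2) (eps : R) :
  rmet D1 -> rmet D2 -> 0 <= eps ->
  (forall a b, Rbar_le (D2 (J a) (J b)) (D1 a b)) ->
  (forall a b, Rbar_le (D1 a b) (Rbar_plus (D2 (J a) (J b)) (Finite eps))) ->
  forall al be, is_fmeasure D1 al -> is_fmeasure D1 be ->
  Rbar_le (prokhorov D1 al be) (Rbar_plus (prokhorov D2 (push J al) (push J be)) (Finite eps)).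
Proof.
  intros HD1 HD2 Heps Hl Hu al be Ha Hb. pose proof (lip_cont D1 D2 J Hl) as Hc.
  assert (one : forall a b e, is_fmeasure D1 a -> is_fmeasure D1 b -> 0 < e ->
     (forall K, is_closed D2 K -> a (fun x => K (J x)) <= b (fun x => nbhd D2 K e (J x)) + e) ->
     forall S, is_closed D1 S -> a S <= b (nbhd D1 S (e + eps)) + (e + eps)).
  { clear al be Ha Hb. intros a b e Ha Hb He H S HS.
    set (K := cl D2 (fun z => exists s, S s /\ J s = z)).
    assert (HK : is_closed D2 K) by (apply cl_closed; auto).
    assert (a S <= a (fun x => K (J x))).
    { apply fmeasure_mono with D1; auto. apply borel_closed; auto.
      apply borel_closed. apply cont_closed with D2; auto.
      intros x Hx. apply cl_sub; auto. exists x; auto. }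
    assert (b (fun x => nbhd D2 K e (J x)) <= b (nbhd D1 S (e + eps))).
    { apply fmeasure_mono with D1; auto. apply borel_pre with D2; auto. apply nbhd_borel; auto.
      apply nbhd_borel; auto.
      intros x [k [Hk Hxk]].
      destruct (fin_of_lt D2 (J x) k e HD2 Hxk) as [t [Et [Ht1 Ht2]]].
      destruct (Hk ((e - t)/2) ltac:(lra)) as [z [[s [Hs <-]] Hks]].
      exists s. split; auto.
      assert (Hlt : Rbar_lt (D2 (J x) (J s)) (Finite e)).
      { replace e with ((t + (e - t)/2) + (e - t)/2) by field.
        apply tri_lt with k; auto. rewrite Et. simpl. lra. }
      destruct (fin_of_lt D2 (J x) (J s) e HD2 Hlt) as [u [Eu [Hu1 Hu2]]].
      eapply Rbar_le_lt_trans. apply Hu. rewrite Eu. simpl. lra. }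
    specialize (H K HK). lra. }
  rewrite !prok_eq. apply glbP_shift; auto.
  - intros e [H _]; auto.
  - intros e [He H]. split. lra. intros S HS. split.
    + apply one; auto. intros K HK. apply (H K HK).
    + apply one; auto. intros K HK. apply (H K HK).
Qed.

Lemma sig_eq {A : Type} {P : A -> Prop} (a b : {x | P x}) : proj1_sig a = proj1_sig b -> a = b.
Proof. destruct a as [a Ha], b as [b Hb]. simpl. intro E. subst. f_equal. apply proof_irrelevance. Qed.

Definition pushM {T T'} (d : T -> T -> R) (d' : T' -> T' -> R) (g : T -> T')
  (Hg : forall x y, Rbar_le (fin_dist d' (g x) (g y)) (fin_dist d x y)) (mu : Mf d) : Mf d' :=
  exist _ (push g (proj1_sig mu))
    (push_fmeasure (fin_dist d) (fin_dist d') g _ (lip_cont _ _ _ Hg) (proj2_sig mu)).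

Lemma pushM_lip {T T'} (d : T -> T -> R) (d' : T' -> T' -> R) (g : T -> T') Hg :
  is_metric d -> is_metric d' ->
  forall a b, Rbar_le (dP d' (pushM d d' g Hg a) (pushM d d' g Hg b)) (dP d a b).
Proof.
  intros Hd Hd' a b. unfold dP, pushM. simpl.
  apply prok_lip; auto using rmet_fin. apply (proj2_sig a). apply (proj2_sig b).
Qed.

Lemma push2_eq {T T'} (d : T -> T -> R) (d' : T' -> T' -> R) (g : T -> T') Hg nu :
  push2 d d' g nu = push (pushM d d' g Hg) nu.
Proof.
  apply functional_extensionality. intro B. unfold push2, push. f_equal.
  apply functional_extensionality. intro mu. apply propositional_extensionality. split.
  - intros [eta [HB Heq]]. replace (pushM d d' g Hg mu) with eta; auto. apply sig_eq. simpl. auto.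
  - intro HB. exists (pushM d d' g Hg mu). split; auto.
Qed.

Lemma dP_rmet {T} (d : T -> T -> R) : is_metric d -> rmet (dP d).
Proof. intro H. apply (prokM_rmet (fin_dist d)). apply rmet_fin; auto. Qed.

Lemma conv_sub {X S : Type} (r : X -> X -> R) (r' : S -> S -> R) (e : X -> S) (u : nat -> S) :
  is_metric r' -> (forall x y, r' (e x) (e y) = r x y) -> is_complete r ->
  (forall eps, 0 < eps -> exists N, forall n m, (N <= n)%nat -> (N <= m)%nat -> r' (u n) (u m) < eps) ->
  (forall N, exists n, (N <= n)%nat /\ exists x, u n = e x) ->
  exists l, forall eps, 0 < eps -> exists N, forall n, (N <= n)%nat -> r' (u n) l < eps.
Proof.
  intros [Hm1 [Hm2 Hm3]] He Hc Hu H.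
  assert (H' : forall N, exists p : nat * X, (N <= fst p)%nat /\ u (fst p) = e (snd p)).
  { intro N. destruct (H N) as [n [Hn [x Hx]]]. exists (n, x). simpl. auto. }
  set (pk := fun N => proj1_sig (constructive_indefinite_description _ (H' N))).
  assert (Hpk : forall N, (N <= fst (pk N))%nat /\ u (fst (pk N)) = e (snd (pk N))).
  { intro N. unfold pk. exact (proj2_sig (constructive_indefinite_description _ (H' N))). }
  destruct (Hc (fun k => snd (pk k))) as [l Hl].
  { intros eps Heps. destruct (Hu eps Heps) as [N HN]. exists N. intros n m Hn Hm.
    rewrite <- He. rewrite <- (proj2 (Hpk n)), <- (proj2 (Hpk m)).
    apply HN. pose proof (proj1 (Hpk n)); lia. pose proof (proj1 (Hpk m)); lia. }
  exists (e l). intros eps Heps.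
  destruct (Hu (eps/2) ltac:(lra)) as [N1 HN1]. destruct (Hl (eps/2) ltac:(lra)) as [N2 HN2].
  exists (max N1 N2). intros n Hn.
  pose proof (Hm3 (u n) (u (fst (pk n))) (e l)).
  assert (r' (u n) (u (fst (pk n))) < eps/2).
  { apply HN1. lia. pose proof (proj1 (Hpk n)); lia. }
  assert (r' (u (fst (pk n))) (e l) < eps/2).
  { rewrite (proj2 (Hpk n)), He. apply HN2. lia. }
  lra.
Qed.

Lemma polish_sum {X Y : Type} (r : X -> X -> R) (d : Y -> Y -> R) (r' : (X + Y) -> (X + Y) -> R) :
  polish_metric r -> polish_metric d -> extends_both r d r' -> polish_metric r'.
Proof.
  intros [Hr [Hrc Hrs]] [Hd [Hdc Hds]] [Hm [Hl Hrr]]. split; [exact Hm | split].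
  - intros u Hu. destruct (classic (forall N, exists n, (N <= n)%nat /\ exists x, u n = inl x)) as [H|H].
    + apply conv_sub with r inl; auto.
    + apply not_all_ex_not in H. destruct H as [N0 HN0].
      apply conv_sub with d inr; auto.
      intro N. exists (max N N0). split. lia.
      destruct (u (max N N0)) as [x|y] eqn:E.
      * exfalso. apply HN0. exists (max N N0). split. lia. exists x; auto.
      * exists y; auto.
  - destruct Hrs as [DX [[fX HfX] HDX]]. destruct Hds as [DY [[fY HfY] HDY]].
    exists (fun a => match a with inl x => DX x | inr y => DY y end). split.
    + exists (fun a => match a with inl x => (2 * fX x)%nat | inr y => S (2 * fY y) end).
      intros [x|y] [x'|y'] H1 H2 H3.
      * f_equal. apply HfX; auto. lia.
      * lia.
      * lia.
      * f_equal. apply HfY; auto. lia.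
    + intros [x|y] e He.
      * destruct (HDX x e He) as [z [Hz Hxz]]. exists (inl z). rewrite Hl. auto.
      * destruct (HDY y e He) as [z [Hz Hxz]]. exists (inr z). rewrite Hrr. auto.
Qed.

Section Glue.
Context {X Y Z : Type} (r : X -> X -> R) (d : Y -> Y -> R) (dZ : Z -> Z -> R)
  (iX : X -> Z) (iY : Y -> Z) (eps : R).
Hypotheses (Hr : is_metric r) (Hd : is_metric d) (HZ : is_metric dZ)
  (HiX : isometric r dZ iX) (HiY : isometric d dZ iY) (Heps : 0 < eps).

Definition jj (a : X + Y) : Z := match a with inl x => iX x | inr y => iY y end.
Definition sep (a b : X + Y) : R :=
  match a, b with inl _, inl _ => 0 | inr _, inr _ => 0 | _, _ => 1 end.
Definition rg (a b : X + Y) : R := dZ (jj a) (jj b) + sep a b * eps.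

Lemma dZ_ge0 z z' : 0 <= dZ z z'.
Proof.
  destruct HZ as [H1 [H2 H3]]. pose proof (H3 z z' z). rewrite (H2 z' z) in H.
  assert (dZ z z = 0) by (apply H1; reflexivity). lra.
Qed.

Lemma rg_metric : is_metric rg.
Proof.
  destruct HZ as [H1 [H2 H3]]. unfold rg. split; [|split].
  - intros [x|y] [x'|y']; simpl; rewrite ?Rmult_0_l, ?Rplus_0_r.
    + rewrite HiX. split. intro H. f_equal. apply Hr; auto. intro H; injection H; intros ->. apply Hr; auto.
    + pose proof (dZ_ge0 (iX x) (iY y')). split; intro; [lra|discriminate].
    + pose proof (dZ_ge0 (iY y) (iX x')). split; intro; [lra|discriminate].
    + rewrite HiY. split. intro H. f_equal. apply Hd; auto. intro H; injection H; intros ->. apply Hd; auto.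
  - intros [x|y] [x'|y']; simpl; rewrite H2; reflexivity.
  - intros a b c. pose proof (H3 (jj a) (jj b) (jj c)).
    assert (sep a c <= sep a b + sep b c) by (destruct a, b, c; simpl; lra).
    assert (0 <= eps) by lra.
    pose proof (Rmult_le_compat_r eps _ _ H4 H0). lra.
Qed.

Lemma rg_ext : extends_both r d rg.
Proof.
  split. apply rg_metric. unfold rg; simpl. split; intros; rewrite Rmult_0_l, Rplus_0_r; auto.
Qed.

Lemma jj_lip a b : Rbar_le (fin_dist dZ (jj a) (jj b)) (fin_dist rg a b).
Proof.
  unfold fin_dist, rg. simpl. assert (0 <= sep a b) by (destruct a, b; simpl; lra).
  pose proof (Rmult_le_pos _ _ H (Rlt_le _ _ Heps)). lra.
Qed.

Lemma jj_up a b : Rbar_le (fin_dist rg a b) (Rbar_plus (fin_dist dZ (jj a) (jj b)) (Finite eps)).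
Proof.
  unfold fin_dist, rg. simpl. assert (sep a b <= 1) by (destruct a, b; simpl; lra).
  pose proof (Rmult_le_compat_r eps _ _ (Rlt_le _ _ Heps) H). lra.
Qed.

Lemma inl_lip x x' : Rbar_le (fin_dist rg (inl x) (inl x')) (fin_dist r x x').
Proof. unfold fin_dist, rg; simpl. rewrite HiX. lra. Qed.
Lemma inr_lip y y' : Rbar_le (fin_dist rg (inr y) (inr y')) (fin_dist d y y').
Proof. unfold fin_dist, rg; simpl. rewrite HiY. lra. Qed.
Lemma iX_lip x x' : Rbar_le (fin_dist dZ (iX x) (iX x')) (fin_dist r x x').
Proof. unfold fin_dist; simpl. rewrite HiX. lra. Qed.
Lemma iY_lip y y' : Rbar_le (fin_dist dZ (iY y) (iY y')) (fin_dist d y y').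
Proof. unfold fin_dist; simpl. rewrite HiY. lra. Qed.

Lemma glue_bound nu lam : is_2measure r nu -> is_2measure d lam ->
  Rbar_le (dP2 rg (push2 r rg inl nu) (push2 d rg inr lam))
          (Rbar_plus (dP2 dZ (push2 r dZ iX nu) (push2 d dZ iY lam)) (Finite eps)).
Proof.
  intros Hnu Hlam. unfold dP2.
  rewrite (push2_eq r rg inl inl_lip), (push2_eq d rg inr inr_lip),
          (push2_eq r dZ iX iX_lip), (push2_eq d dZ iY iY_lip).
  set (Jp := pushM rg dZ jj jj_lip).
  assert (E1 : push (pushM r dZ iX iX_lip) nu = push Jp (push (pushM r rg inl inl_lip) nu)).
  { apply functional_extensionality. intro B. unfold push. f_equal.
    apply functional_extensionality. intro mu. f_equal. apply sig_eq. reflexivity. }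
  assert (E2 : push (pushM d dZ iY iY_lip) lam = push Jp (push (pushM d rg inr inr_lip) lam)).
  { apply functional_extensionality. intro B. unfold push. f_equal.
    apply functional_extensionality. intro mu. f_equal. apply sig_eq. reflexivity. }
  rewrite E1, E2.
  pose proof rg_metric as Hrg.
  apply G0.
  - apply dP_rmet; auto.
  - apply dP_rmet; auto.
  - lra.
  - intros a b. apply pushM_lip; auto.
  - intros [a Ha] [b Hb]. unfold dP, Jp, pushM. simpl.
    apply G0; auto using rmet_fin. lra. apply jj_lip. apply jj_up.
  - apply push_fmeasure with (dP r); auto. apply lip_cont. intros; apply pushM_lip; auto.
  - apply push_fmeasure with (dP d); auto. apply lip_cont. intros; apply pushM_lip; auto.
Qed.

End Glue.

Theorem mainTheorem18 :
  forall (Xs : RN -> Prop) (r : pts Xs -> pts Xs -> R) (nu : (Mf r -> Prop) -> R)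
         (Ys : RN -> Prop) (d : pts Ys -> pts Ys -> R) (lam : (Mf d -> Prop) -> R),
    is_m2m Xs r nu -> is_m2m Ys d lam ->
    d2GP Xs r nu Ys d lam =
    Rbar_glb (fun v => exists r' : (pts Xs + pts Ys)%type -> (pts Xs + pts Ys)%type -> R,
      extends_both r d r' /\
      v = dP2 r' (push2 r r' inl nu) (push2 d r' inr lam)).
Proof.
  intros Xs r nu Ys d lam [_ [Pr Hnu]] [_ [Pd Hlam]].
  unfold d2GP. apply Rbar_le_antisym.
  - apply Rbar_glb_subset. intros v [r' [Hr' ->]].
    exists (pts Xs + pts Ys)%type, r', inl, inr. split; [|split; [|split]]; auto.
    + apply polish_sum with r d; auto.
    + intros x y. apply (proj1 (proj2 Hr')).
    + intros x y. apply (proj2 (proj2 Hr')).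
  - apply (proj2 (proj2_sig (Rbar_ex_glb _))).
    intros v [Z [dZ [iX [iY [PZ [HiX [HiY ->]]]]]]].
    assert (H0 : Rbar_le (Finite 0) (dP2 dZ (push2 r dZ iX nu) (push2 d dZ iY lam)))
      by apply prok_ge0.
    destruct (dP2 dZ (push2 r dZ iX nu) (push2 d dZ iY lam)) as [vf| |] eqn:Ev.
    + apply Rbar_le_eps. intros h Hh.
      eapply Rbar_le_trans.
      * apply (proj1 (proj2_sig (Rbar_ex_glb _))).
        exists (rg dZ iX iY h). split. apply rg_ext; auto. apply Pr. apply Pd. apply PZ. reflexivity.
      * pose proof (glue_bound r d dZ iX iY h (proj1 Pr) (proj1 Pd) (proj1 PZ) HiX HiY Hh nu lam Hnu Hlam) as G.
        rewrite Ev in G. exact G.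
    + apply Rbar_le_pinf.
    + simpl in H0. contradiction.
Qed.
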